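(* Let $G$ be a three-dimensional space group and $\mathbf{q}$ a point whose site-symmetry group $G_\mathbf{q}$ is maximal and isomorphic to one of the point groups $O$, $T_d$ or $O_h$ (the only crystallographic point groups with four-dimensional irreducible representations). Then there is no point $\mathbf{q}_0$ whose site-symmetry group $G_{\mathbf{q}_0}$ is a subgroup of index two in $G_\mathbf{q}$.
   Context: A space group $G$ is a group of affine isometries of $\mathbb{R}^3$ containing a Bravais lattice of translations. The site-symmetry group of a point $\mathbf{q}$ is $G_\mathbf{q}=\{g\in G:g\mathbf{q}=\mathbf{q}\}$; it is maximal if there is no finite group $H\neq G_\mathbf{q}$ with $G_\mathbf{q}\subset H\subset G$. *)

(* Defs.v *)
From HB Require Import structures.
From mathcomp Require Import all_boot all_order all_algebra.
From mathcomp Require Import reals.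
Set Implicit Arguments. Unset Strict Implicit. Unset Printing Implicit Defensive.
Import Order.TTheory GRing.Theory Num.Theory.
Local Open Scope ring_scope.

Section Defs.
Variable R : realType.

Definition aff := ('M[R]_3 * 'cV[R]_3)%type.

Definition act (g : aff) (x : 'cV[R]_3) : 'cV[R]_3 := g.1 *m x + g.2.

Definition comp (g h : aff) : aff := (g.1 *m h.1, g.1 *m h.2 + g.2).
Definition aff_id : aff := (1%:M, 0).
(* inverse of an isometry (A orthogonal) *)
Definition aff_inv (g : aff) : aff := (g.1^T, - (g.1^T *m g.2)).

Definition orthogonal_mx (A : 'M[R]_3) : Prop := A *m A^T = 1%:M.

Definition isom_group (H : aff -> Prop) : Prop :=
  [/\ forall g, H g -> orthogonal_mx g.1,
      H aff_id,
      forall g h, H g -> H h -> H (comp g h)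
    & forall g, H g -> H (aff_inv g)].

Definition finite_set (H : aff -> Prop) : Prop :=
  exists s : seq aff, forall g, H g -> g \in s.

Definition space_group (G : aff -> Prop) : Prop :=
  isom_group G /\
  exists B : 'M[R]_3, B \in unitmx /\
    forall t : 'cV[R]_3,
      G (1%:M, t) <-> exists v : 'cV[int]_3, t = B *m map_mx (fun z : int => z%:~R) v.

Definition site (G : aff -> Prop) (q : 'cV[R]_3) : aff -> Prop :=
  fun g => G g /\ act g q = q.

Definition maximal_site (G : aff -> Prop) (q : 'cV[R]_3) : Prop :=
  forall H : aff -> Prop, isom_group H -> finite_set H ->
    (forall g, site G q g -> H g) -> (forall g, H g -> G g) ->
    forall g, H g -> site G q g.

(* O_h : all signed permutation matrices *)
Definition Oh_group (M : 'M[R]_3) : Prop :=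
  (forall i j, M i j = 0 \/ M i j = 1 \/ M i j = -1) /\ orthogonal_mx M.
Definition O_group (M : 'M[R]_3) : Prop := Oh_group M /\ \det M = 1.
(* T_d : signed permutation matrices whose product of nonzero entries is 1 *)
Definition Td_group (M : 'M[R]_3) : Prop :=
  Oh_group M /\ \prod_(i < 3) (\sum_(j < 3) M i j) = 1.

Definition isomorphic (H : aff -> Prop) (P : 'M[R]_3 -> Prop) : Prop :=
  exists f : aff -> 'M[R]_3,
    [/\ forall g, H g -> P (f g),
        forall g h, H g -> H h -> f g = f h -> g = h,
        forall M, P M -> exists2 g, H g & f g = M
      & forall g h, H g -> H h -> f (comp g h) = f g *m f h].

Definition index_two_subgroup (K H : aff -> Prop) : Prop :=
  (forall g, K g -> H g) /\
  exists c, [/\ H c, ~ K c &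
    forall g, H g -> K g \/ K (comp (aff_inv c) g)].

End Defs.

(* Main.v *)
Require Import Defs.
From HB Require Import structures.
From mathcomp Require Import all_boot all_order all_algebra.
From mathcomp Require Import reals ring lra.
Set Implicit Arguments. Unset Strict Implicit. Unset Printing Implicit Defensive.
Import Order.TTheory GRing.Theory Num.Theory.
Local Open Scope ring_scope.

Section LinAlg.
Variable R : realType.
Local Notation i0 := (@Ordinal 3 0 isT).
Local Notation i1 := (@Ordinal 3 1 isT).
Local Notation i2 := (@Ordinal 3 2 isT).

Lemma ord3P (P : 'I_3 -> Prop) : P i0 -> P i1 -> P i2 -> forall i, P i.
Proof.
move=> h0 h1 h2 [[|[|[|k]]] Hk] //.
- by rewrite (bool_irrelevance Hk isT).
- by rewrite (bool_irrelevance Hk isT).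
- by rewrite (bool_irrelevance Hk isT).
Qed.

Lemma mx3P (A B : 'M[R]_3) :
  A i0 i0 = B i0 i0 -> A i0 i1 = B i0 i1 -> A i0 i2 = B i0 i2 ->
  A i1 i0 = B i1 i0 -> A i1 i1 = B i1 i1 -> A i1 i2 = B i1 i2 ->
  A i2 i0 = B i2 i0 -> A i2 i1 = B i2 i1 -> A i2 i2 = B i2 i2 -> A = B.
Proof.
move=> *; apply/matrixP; apply: ord3P; apply: ord3P => //.
Qed.

Lemma mul3E m n (A : 'M[R]_(m, 3)) (B : 'M[R]_(3, n)) i j :
  (A *m B) i j = A i i0 * B i0 j + A i i1 * B i1 j + A i i2 * B i2 j.
Proof.
rewrite mxE !big_ord_recl big_ord0 addr0 addrA.
have e0 : (ord0 : 'I_3) = i0 by apply: val_inj.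
have e1 : (lift ord0 (ord0 : 'I_2)) = i1 by apply: val_inj.
have e2 : (lift ord0 (lift ord0 (ord0 : 'I_1))) = i2 by apply: val_inj.
by rewrite e2 e1 e0.
Qed.

Definition mk3 (a b c d e f g h k : R) : 'M[R]_3 :=
  \matrix_(i, j) nth 0 (nth [::] [:: [:: a; b; c]; [:: d; e; f]; [:: g; h; k]] i) j.

Definition crossmx (v : 'cV[R]_3) : 'M[R]_3 :=
  let p := v i0 0 in let q := v i1 0 in let r := v i2 0 in
  mk3 0 (- r) q r 0 (- p) (- q) p 0.

Definition cofmx (M : 'M[R]_3) : 'M[R]_3 :=
  let c i j i' j' := M i j * M i' j' - M i j' * M i' j in
  mk3 (c i1 i1 i2 i2) (c i1 i2 i2 i0) (c i1 i0 i2 i1)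
      (c i2 i1 i0 i2) (c i2 i2 i0 i0) (c i2 i0 i0 i1)
      (c i0 i1 i1 i2) (c i0 i2 i1 i0) (c i0 i0 i1 i1).

Definition det3 (M : 'M[R]_3) : R :=
  M i0 i0 * (M i1 i1 * M i2 i2 - M i1 i2 * M i2 i1)
  + M i0 i1 * (M i1 i2 * M i2 i0 - M i1 i0 * M i2 i2)
  + M i0 i2 * (M i1 i0 * M i2 i1 - M i1 i1 * M i2 i0).

Lemma cross_cof (M : 'M[R]_3) (x : 'cV[R]_3) :
  crossmx (M *m x) *m M = cofmx M *m crossmx x.
Proof.
by apply: mx3P; rewrite /crossmx /cofmx !mul3E !mxE /= ?mul3E; ring.
Qed.

Lemma cof_det (M : 'M[R]_3) : (cofmx M)^T *m M = det3 M *: 1%:M.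
Proof.
by apply: mx3P; rewrite !mul3E !mxE /= /det3; ring.
Qed.
Lemma rep3 (p q r x00 x01 x02 x10 x11 x12 x20 x21 x22 : R) :
  (x00 * 0 + x01 * r + x02 * (-q) - (0 * x00 + (-r) * x10 + q * x20)) = 0 ->
  (x00 * (-r) + x01 * 0 + x02 * p - (0 * x01 + (-r) * x11 + q * x21)) = 0 ->
  (x00 * q + x01 * (-p) + x02 * 0 - (0 * x02 + (-r) * x12 + q * x22)) = 0 ->
  (x10 * 0 + x11 * r + x12 * (-q) - (r * x00 + 0 * x10 + (-p) * x20)) = 0 ->
  (x10 * (-r) + x11 * 0 + x12 * p - (r * x01 + 0 * x11 + (-p) * x21)) = 0 ->
  (x10 * q + x11 * (-p) + x12 * 0 - (r * x02 + 0 * x12 + (-p) * x22)) = 0 ->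
  (x20 * 0 + x21 * r + x22 * (-q) - ((-q) * x00 + p * x10 + 0 * x20)) = 0 ->
  (x20 * (-r) + x21 * 0 + x22 * p - ((-q) * x01 + p * x11 + 0 * x21)) = 0 ->
  (x20 * q + x21 * (-p) + x22 * 0 - ((-q) * x02 + p * x12 + 0 * x22)) = 0 ->
  exists al be ga : R,
    2%:R * (p^+2+q^+2+r^+2)^+2 * x00 = al + ga * (p * p) /\
    2%:R * (p^+2+q^+2+r^+2)^+2 * x01 = be * (-r) + ga * (p * q) /\
    2%:R * (p^+2+q^+2+r^+2)^+2 * x02 = be * q + ga * (p * r) /\
    2%:R * (p^+2+q^+2+r^+2)^+2 * x10 = be * r + ga * (q * p) /\
    2%:R * (p^+2+q^+2+r^+2)^+2 * x11 = al + ga * (q * q) /\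
    2%:R * (p^+2+q^+2+r^+2)^+2 * x12 = be * (-p) + ga * (q * r) /\
    2%:R * (p^+2+q^+2+r^+2)^+2 * x20 = be * (-q) + ga * (r * p) /\
    2%:R * (p^+2+q^+2+r^+2)^+2 * x21 = be * p + ga * (r * q) /\
    2%:R * (p^+2+q^+2+r^+2)^+2 * x22 = al + ga * (r * r).
Proof.
move=> h00 h01 h02 h10 h11 h12 h20 h21 h22.
exists ((p^+2+q^+2+r^+2) * ((p^+2+q^+2+r^+2) * (x00+x11+x22) - (p * x00 * p + p * x01 * q + p * x02 * r + q * x10 * p + q * x11 * q + q * x12 * r + r * x20 * p + r * x21 * q + r * x22 * r))), (-((p^+2+q^+2+r^+2) * (x00 * 0 + x01 * r + x02 * (-q) + x10 * (-r) + x11 * 0 + x12 * p + x20 * q + x21 * (-p) + x22 * 0))), (3%:R * (p * x00 * p + p * x01 * q + p * x02 * r + q * x10 * p + q * x11 * q + q * x12 * r + r * x20 * p + r * x21 * q + r * x22 * r) - (p^+2+q^+2+r^+2) * (x00+x11+x22)).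
split; [|split; [|split; [|split; [|split; [|split; [|split; [|split]]]]]]].
- apply/eqP; rewrite -subr_eq0; apply/eqP.
  transitivity (((-3%:R) * p * q * r) * (x00 * 0 + x01 * r + x02 * (-q) - (0 * x00 + (-r) * x10 + q * x20)) + ((-1%:R) * r * r * r + (-1%:R) * q * q * r + (-2%:R) * p * p * r) * (x00 * (-r) + x01 * 0 + x02 * p - (0 * x01 + (-r) * x11 + q * x21)) + (1%:R * q * r * r + 1%:R * q * q * q + 2%:R * p * p * q) * (x00 * q + x01 * (-p) + x02 * 0 - (0 * x02 + (-r) * x12 + q * x22)) + ((-2%:R) * p * p * r) * (x10 * 0 + x11 * r + x12 * (-q) - (r * x00 + 0 * x10 + (-p) * x20)) + ((-6%:R) * p * q * r) * (x10 * (-r) + x11 * 0 + x12 * p - (r * x01 + 0 * x11 + (-p) * x21)) + ((-2%:R) * p * r * r + 1%:R * p * q * q) * (x10 * q + x11 * (-p) + x12 * 0 - (r * x02 + 0 * x12 + (-p) * x22)) + (2%:R * p * p * q) * (x20 * 0 + x21 * r + x22 * (-q) - ((-q) * x00 + p * x10 + 0 * x20)) + ((-1%:R) * p * r * r + 2%:R * p * q * q) * (x20 * (-r) + x21 * 0 + x22 * p - ((-q) * x01 + p * x11 + 0 * x21))); first by ring.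
  by rewrite ?h00 ?h01 ?h02 ?h10 ?h11 ?h12 ?h20 ?h21 ?h22 !mulr0 !addr0.
- apply/eqP; rewrite -subr_eq0; apply/eqP.
  transitivity ((2%:R * r * r * r + (-1%:R) * q * q * r + 2%:R * p * p * r) * (x00 * 0 + x01 * r + x02 * (-q) - (0 * x00 + (-r) * x10 + q * x20)) + ((-3%:R) * p * q * r) * (x00 * (-r) + x01 * 0 + x02 * p - (0 * x01 + (-r) * x11 + q * x21)) + ((-2%:R) * p * r * r + 1%:R * p * q * q + (-2%:R) * p * p * p) * (x00 * q + x01 * (-p) + x02 * 0 - (0 * x02 + (-r) * x12 + q * x22)) + (1%:R * r * r * r + (-5%:R) * q * q * r + 1%:R * p * p * r) * (x10 * (-r) + x11 * 0 + x12 * p - (r * x01 + 0 * x11 + (-p) * x21)) + ((-3%:R) * q * r * r + (-3%:R) * p * p * q) * (x10 * q + x11 * (-p) + x12 * 0 - (r * x02 + 0 * x12 + (-p) * x22)) + ((-1%:R) * q * r * r + 2%:R * q * q * q + 2%:R * p * p * q) * (x20 * (-r) + x21 * 0 + x22 * p - ((-q) * x01 + p * x11 + 0 * x21))); first by ring.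
  by rewrite ?h00 ?h01 ?h02 ?h10 ?h11 ?h12 ?h20 ?h21 ?h22 !mulr0 !addr0.
- apply/eqP; rewrite -subr_eq0; apply/eqP.
  transitivity (((-3%:R) * q * r * r + (-1%:R) * q * q * q + (-2%:R) * p * p * q) * (x00 * 0 + x01 * r + x02 * (-q) - (0 * x00 + (-r) * x10 + q * x20)) + (2%:R * p * r * r + 1%:R * p * q * q + 2%:R * p * p * p) * (x00 * (-r) + x01 * 0 + x02 * p - (0 * x01 + (-r) * x11 + q * x21)) + ((-1%:R) * p * q * r) * (x00 * q + x01 * (-p) + x02 * 0 - (0 * x02 + (-r) * x12 + q * x22)) + ((-3%:R) * p * r * r + (-1%:R) * p * q * q) * (x10 * 0 + x11 * r + x12 * (-q) - (r * x00 + 0 * x10 + (-p) * x20)) + ((-4%:R) * q * r * r + 1%:R * p * p * q) * (x10 * (-r) + x11 * 0 + x12 * p - (r * x01 + 0 * x11 + (-p) * x21)) + ((-2%:R) * r * r * r + 1%:R * p * p * r) * (x10 * q + x11 * (-p) + x12 * 0 - (r * x02 + 0 * x12 + (-p) * x22)) + (2%:R * p * q * r) * (x20 * 0 + x21 * r + x22 * (-q) - ((-q) * x00 + p * x10 + 0 * x20)) + (2%:R * q * q * r) * (x20 * (-r) + x21 * 0 + x22 * p - ((-q) * x01 + p * x11 + 0 * x21))); first by ring.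
  by rewrite ?h00 ?h01 ?h02 ?h10 ?h11 ?h12 ?h20 ?h21 ?h22 !mulr0 !addr0.
- apply/eqP; rewrite -subr_eq0; apply/eqP.
  transitivity (((-1%:R) * q * q * r + 4%:R * p * p * r) * (x00 * 0 + x01 * r + x02 * (-q) - (0 * x00 + (-r) * x10 + q * x20)) + (1%:R * p * q * r) * (x00 * (-r) + x01 * 0 + x02 * p - (0 * x01 + (-r) * x11 + q * x21)) + (2%:R * p * r * r + 1%:R * p * q * q) * (x00 * q + x01 * (-p) + x02 * 0 - (0 * x02 + (-r) * x12 + q * x22)) + ((-1%:R) * r * r * r + (-3%:R) * q * q * r + 1%:R * p * p * r) * (x10 * (-r) + x11 * 0 + x12 * p - (r * x01 + 0 * x11 + (-p) * x21)) + (1%:R * q * r * r + 2%:R * q * q * q + 1%:R * p * p * q) * (x10 * q + x11 * (-p) + x12 * 0 - (r * x02 + 0 * x12 + (-p) * x22)) + ((-2%:R) * p * p * p) * (x20 * 0 + x21 * r + x22 * (-q) - ((-q) * x00 + p * x10 + 0 * x20)) + ((-1%:R) * q * r * r + (-2%:R) * p * p * q) * (x20 * (-r) + x21 * 0 + x22 * p - ((-q) * x01 + p * x11 + 0 * x21))); first by ring.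
  by rewrite ?h00 ?h01 ?h02 ?h10 ?h11 ?h12 ?h20 ?h21 ?h22 !mulr0 !addr0.
- apply/eqP; rewrite -subr_eq0; apply/eqP.
  transitivity ((6%:R * p * q * r) * (x00 * 0 + x01 * r + x02 * (-q) - (0 * x00 + (-r) * x10 + q * x20)) + ((-1%:R) * r * r * r + 2%:R * q * q * r) * (x00 * (-r) + x01 * 0 + x02 * p - (0 * x01 + (-r) * x11 + q * x21)) + (3%:R * q * r * r + (-1%:R) * p * p * q) * (x00 * q + x01 * (-p) + x02 * 0 - (0 * x02 + (-r) * x12 + q * x22)) + (2%:R * r * r * r + 2%:R * q * q * r + 1%:R * p * p * r) * (x10 * 0 + x11 * r + x12 * (-q) - (r * x00 + 0 * x10 + (-p) * x20)) + (3%:R * p * q * r) * (x10 * (-r) + x11 * 0 + x12 * p - (r * x01 + 0 * x11 + (-p) * x21)) + ((-2%:R) * p * r * r + (-2%:R) * p * q * q + (-1%:R) * p * p * p) * (x10 * q + x11 * (-p) + x12 * 0 - (r * x02 + 0 * x12 + (-p) * x22)) + ((-2%:R) * p * p * q) * (x20 * 0 + x21 * r + x22 * (-q) - ((-q) * x00 + p * x10 + 0 * x20)) + (1%:R * p * r * r + (-2%:R) * p * q * q) * (x20 * (-r) + x21 * 0 + x22 * p - ((-q) * x01 + p * x11 + 0 * x21))); first by ring.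
  by rewrite ?h00 ?h01 ?h02 ?h10 ?h11 ?h12 ?h20 ?h21 ?h22 !mulr0 !addr0.
- apply/eqP; rewrite -subr_eq0; apply/eqP.
  transitivity ((4%:R * p * r * r + (-3%:R) * p * q * q) * (x00 * 0 + x01 * r + x02 * (-q) - (0 * x00 + (-r) * x10 + q * x20)) + (1%:R * q * r * r + 1%:R * p * p * q) * (x00 * (-r) + x01 * 0 + x02 * p - (0 * x01 + (-r) * x11 + q * x21)) + (2%:R * r * r * r + 1%:R * q * q * r) * (x00 * q + x01 * (-p) + x02 * 0 - (0 * x02 + (-r) * x12 + q * x22)) + ((-2%:R) * q * q * q + (-1%:R) * p * p * q) * (x10 * 0 + x11 * r + x12 * (-q) - (r * x00 + 0 * x10 + (-p) * x20)) + (3%:R * p * r * r + 1%:R * p * p * p) * (x10 * (-r) + x11 * 0 + x12 * p - (r * x01 + 0 * x11 + (-p) * x21)) + ((-1%:R) * p * q * r) * (x10 * q + x11 * (-p) + x12 * 0 - (r * x02 + 0 * x12 + (-p) * x22)) + ((-2%:R) * q * q * r + (-2%:R) * p * p * r) * (x20 * 0 + x21 * r + x22 * (-q) - ((-q) * x00 + p * x10 + 0 * x20)) + ((-2%:R) * p * q * q) * (x20 * q + x21 * (-p) + x22 * 0 - ((-q) * x02 + p * x12 + 0 * x22))); first by ring.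
  by rewrite ?h00 ?h01 ?h02 ?h10 ?h11 ?h12 ?h20 ?h21 ?h22 !mulr0 !addr0.
- apply/eqP; rewrite -subr_eq0; apply/eqP.
  transitivity (((-1%:R) * q * r * r + (-1%:R) * q * q * q + (-4%:R) * p * p * q) * (x00 * 0 + x01 * r + x02 * (-q) - (0 * x00 + (-r) * x10 + q * x20)) + ((-2%:R) * p * r * r + (-3%:R) * p * q * q) * (x00 * (-r) + x01 * 0 + x02 * p - (0 * x01 + (-r) * x11 + q * x21)) + ((-1%:R) * p * q * r) * (x00 * q + x01 * (-p) + x02 * 0 - (0 * x02 + (-r) * x12 + q * x22)) + (1%:R * p * r * r + (-1%:R) * p * q * q + 2%:R * p * p * p) * (x10 * 0 + x11 * r + x12 * (-q) - (r * x00 + 0 * x10 + (-p) * x20)) + ((-2%:R) * q * r * r + (-2%:R) * q * q * q + 1%:R * p * p * q) * (x10 * (-r) + x11 * 0 + x12 * p - (r * x01 + 0 * x11 + (-p) * x21)) + (1%:R * p * p * r) * (x10 * q + x11 * (-p) + x12 * 0 - (r * x02 + 0 * x12 + (-p) * x22)) + ((-2%:R) * p * q * r) * (x20 * 0 + x21 * r + x22 * (-q) - ((-q) * x00 + p * x10 + 0 * x20)) + ((-2%:R) * r * r * r + (-2%:R) * q * q * r) * (x20 * (-r) + x21 * 0 + x22 * p - ((-q) * x01 + p * x11 + 0 * x21))); first by ring.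
  by rewrite ?h00 ?h01 ?h02 ?h10 ?h11 ?h12 ?h20 ?h21 ?h22 !mulr0 !addr0.
- apply/eqP; rewrite -subr_eq0; apply/eqP.
  transitivity ((2%:R * p * r * r + (-5%:R) * p * q * q + 2%:R * p * p * p) * (x00 * 0 + x01 * r + x02 * (-q) - (0 * x00 + (-r) * x10 + q * x20)) + (1%:R * q * r * r + (-2%:R) * q * q * q + 1%:R * p * p * q) * (x00 * (-r) + x01 * 0 + x02 * p - (0 * x01 + (-r) * x11 + q * x21)) + ((-3%:R) * q * q * r) * (x00 * q + x01 * (-p) + x02 * 0 - (0 * x02 + (-r) * x12 + q * x22)) + (3%:R * p * p * q) * (x10 * 0 + x11 * r + x12 * (-q) - (r * x00 + 0 * x10 + (-p) * x20)) + (1%:R * p * r * r + 1%:R * p * p * p) * (x10 * (-r) + x11 * 0 + x12 * p - (r * x01 + 0 * x11 + (-p) * x21)) + (3%:R * p * q * r) * (x10 * q + x11 * (-p) + x12 * 0 - (r * x02 + 0 * x12 + (-p) * x22)) + (2%:R * r * r * r + 2%:R * q * q * r + 2%:R * p * p * r) * (x20 * 0 + x21 * r + x22 * (-q) - ((-q) * x00 + p * x10 + 0 * x20)) + ((-4%:R) * p * q * q) * (x20 * q + x21 * (-p) + x22 * 0 - ((-q) * x02 + p * x12 + 0 * x22))); first by ring.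
  by rewrite ?h00 ?h01 ?h02 ?h10 ?h11 ?h12 ?h20 ?h21 ?h22 !mulr0 !addr0.
- apply/eqP; rewrite -subr_eq0; apply/eqP.
  transitivity (((-3%:R) * p * q * r) * (x00 * 0 + x01 * r + x02 * (-q) - (0 * x00 + (-r) * x10 + q * x20)) + (2%:R * r * r * r + (-1%:R) * q * q * r + 2%:R * p * p * r) * (x00 * (-r) + x01 * 0 + x02 * p - (0 * x01 + (-r) * x11 + q * x21)) + ((-4%:R) * q * r * r + (-1%:R) * q * q * q + (-1%:R) * p * p * q) * (x00 * q + x01 * (-p) + x02 * 0 - (0 * x02 + (-r) * x12 + q * x22)) + ((-2%:R) * r * r * r + (-2%:R) * q * q * r + 1%:R * p * p * r) * (x10 * 0 + x11 * r + x12 * (-q) - (r * x00 + 0 * x10 + (-p) * x20)) + (3%:R * p * q * r) * (x10 * (-r) + x11 * 0 + x12 * p - (r * x01 + 0 * x11 + (-p) * x21)) + (4%:R * p * r * r + 1%:R * p * q * q + 1%:R * p * p * p) * (x10 * q + x11 * (-p) + x12 * 0 - (r * x02 + 0 * x12 + (-p) * x22))); first by ring.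
  by rewrite ?h00 ?h01 ?h02 ?h10 ?h11 ?h12 ?h20 ?h21 ?h22 !mulr0 !addr0.
Qed.

Lemma cof_orth (A : 'M[R]_3) : A *m A^T = 1%:M -> cofmx A = det3 A *: A.
Proof.
move=> hA.
have h1 : (cofmx A)^T = det3 A *: A^T.
  by rewrite -[(cofmx A)^T]mulmx1 -hA mulmxA cof_det -scalemxAl mul1mx.
by rewrite -[cofmx A]trmxK h1 linearZ /= trmxK.
Qed.

Lemma normv (v : 'cV[R]_3) : v != 0 -> (v i0 0)^+2 + (v i1 0)^+2 + (v i2 0)^+2 != 0.
Proof.
apply: contraNneq => h.
have h0 : v i0 0 = 0 by nra.
have h1 : v i1 0 = 0 by nra.
have h2 : v i2 0 = 0 by nra.
apply/eqP/matrixP => i j; rewrite (ord1 j) mxE.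
by move: i; apply: ord3P.
Qed.

Lemma cross_neq0 (v : 'cV[R]_3) : v != 0 -> crossmx v != 0.
Proof.
move=> hv; apply: contraNneq hv => h.
have e : forall i j, crossmx v i j = 0 by move=> i j; rewrite h mxE.
have h0 := e i2 i1; have h1 := e i0 i2; have h2 := e i1 i0.
rewrite /crossmx !mxE /= in h0 h1 h2.
apply/eqP/matrixP => i j; rewrite (ord1 j) mxE.
by move: i; apply: ord3P.
Qed.

Lemma rot_comm_J (A : 'M[R]_3) (v : 'cV[R]_3) :
  A *m A^T = 1%:M -> A *m (A *m A) = 1%:M -> A *m v = v -> v != 0 ->
  crossmx v *m A = A *m crossmx v.
Proof.
move=> hO h3 hv hv0.
set J := crossmx v. set d := det3 A.
have hJA : J *m A = d *: (A *m J).
  by rewrite /J -{1}hv cross_cof cof_orth // -scalemxAl.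
have hJA' : forall B : 'M[R]_3, J *m (A *m B) = d *: (A *m (J *m B)).
  by move=> B; rewrite mulmxA hJA -scalemxAl -mulmxA.
have key : J = d^+3 *: J.
  rewrite -{1}(mulmx1 J) -h3 hJA' hJA' hJA -!scalemxAr !scalerA.
  rewrite [A *m (A *m (A *m J))]mulmxA [A *m A *m (A *m J)]mulmxA -[A *m A *m A]mulmxA h3 mul1mx.
  by rewrite !exprS expr0 mulr1.
have d3 : d^+3 = 1.
  have : (d^+3 - 1) *: J = 0 by rewrite scalerBl -key scale1r subrr.
  move/eqP; rewrite scaler_eq0 (negbTE (cross_neq0 hv0)) orbF subr_eq0.
  by move/eqP.
have d1 : d = 1.
  have : (d - 1) * (d^+2 + d + 1) = d^+3 - 1 by ring.
  rewrite d3 subrr => /eqP; rewrite mulf_eq0 => /orP [|]; first by rewrite subr_eq0 => /eqP.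
  have pos : forall x : R, x^+2 + x + 1 != 0 by move=> x; apply/eqP; nra.
  by rewrite (negbTE (pos d)).
by rewrite hJA d1 scale1r.
Qed.

Lemma solve_l (c x e : R) : c != 0 -> c * x = e -> x = e / c.
Proof. by move=> hc <-; rewrite mulrAC mulfV // mul1r. Qed.

Lemma comm_J (X Y : 'M[R]_3) (v : 'cV[R]_3) : v != 0 ->
  X *m crossmx v = crossmx v *m X -> Y *m crossmx v = crossmx v *m Y ->
  X *m Y = Y *m X.
Proof.
move=> hv0 /matrixP hX /matrixP hY.
have hn := normv hv0.
have hc : 2%:R * ((v i0 0)^+2 + (v i1 0)^+2 + (v i2 0)^+2)^+2 != 0 :> R.
  by rewrite mulf_neq0 ?expf_neq0 ?pnatr_eq0.
have [al [be [ga [x00 [x01 [x02 [x10 [x11 [x12 [x20 [x21 x22]]]]]]]]]]] :=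
  @rep3 (v i0 0) (v i1 0) (v i2 0) (X i0 i0) (X i0 i1) (X i0 i2) (X i1 i0) (X i1 i1) (X i1 i2) (X i2 i0) (X i2 i1) (X i2 i2)
   ltac:(by move: (hX i0 i0); rewrite !mul3E !mxE /=; lra)
   ltac:(by move: (hX i0 i1); rewrite !mul3E !mxE /=; lra)
   ltac:(by move: (hX i0 i2); rewrite !mul3E !mxE /=; lra)
   ltac:(by move: (hX i1 i0); rewrite !mul3E !mxE /=; lra)
   ltac:(by move: (hX i1 i1); rewrite !mul3E !mxE /=; lra)
   ltac:(by move: (hX i1 i2); rewrite !mul3E !mxE /=; lra)
   ltac:(by move: (hX i2 i0); rewrite !mul3E !mxE /=; lra)
   ltac:(by move: (hX i2 i1); rewrite !mul3E !mxE /=; lra)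
   ltac:(by move: (hX i2 i2); rewrite !mul3E !mxE /=; lra).
have [al' [be' [ga' [y00 [y01 [y02 [y10 [y11 [y12 [y20 [y21 y22]]]]]]]]]]] :=
  @rep3 (v i0 0) (v i1 0) (v i2 0) (Y i0 i0) (Y i0 i1) (Y i0 i2) (Y i1 i0) (Y i1 i1) (Y i1 i2) (Y i2 i0) (Y i2 i1) (Y i2 i2)
   ltac:(by move: (hY i0 i0); rewrite !mul3E !mxE /=; lra)
   ltac:(by move: (hY i0 i1); rewrite !mul3E !mxE /=; lra)
   ltac:(by move: (hY i0 i2); rewrite !mul3E !mxE /=; lra)
   ltac:(by move: (hY i1 i0); rewrite !mul3E !mxE /=; lra)
   ltac:(by move: (hY i1 i1); rewrite !mul3E !mxE /=; lra)
   ltac:(by move: (hY i1 i2); rewrite !mul3E !mxE /=; lra)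
   ltac:(by move: (hY i2 i0); rewrite !mul3E !mxE /=; lra)
   ltac:(by move: (hY i2 i1); rewrite !mul3E !mxE /=; lra)
   ltac:(by move: (hY i2 i2); rewrite !mul3E !mxE /=; lra).
move/(solve_l hc): x00 => x00.
move/(solve_l hc): x01 => x01.
move/(solve_l hc): x02 => x02.
move/(solve_l hc): x10 => x10.
move/(solve_l hc): x11 => x11.
move/(solve_l hc): x12 => x12.
move/(solve_l hc): x20 => x20.
move/(solve_l hc): x21 => x21.
move/(solve_l hc): x22 => x22.
move/(solve_l hc): y00 => y00.
move/(solve_l hc): y01 => y01.
move/(solve_l hc): y02 => y02.
move/(solve_l hc): y10 => y10.
move/(solve_l hc): y11 => y11.
move/(solve_l hc): y12 => y12.
move/(solve_l hc): y20 => y20.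
move/(solve_l hc): y21 => y21.
move/(solve_l hc): y22 => y22.
by apply: mx3P; rewrite !mul3E ?x00 ?x01 ?x02 ?x10 ?x11 ?x12 ?x20 ?x21 ?x22 ?y00 ?y01 ?y02 ?y10 ?y11 ?y12 ?y20 ?y21 ?y22; field.
Qed.


Definition Cm : 'M[R]_3 := mk3 0 0 1 1 0 0 0 1 0.
Definition Dm : 'M[R]_3 := mk3 0 0 (-1) (-1) 0 0 0 1 0.

Lemma cube1 (d : R) : d * (d * d) = 1 -> d = 1.
Proof.
move=> d3.
have : (d - 1) * (d^+2 + d + 1) = d * (d * d) - 1 by ring.
rewrite d3 subrr => /eqP; rewrite mulf_eq0 => /orP [|]; first by rewrite subr_eq0 => /eqP.
have pos : forall x : R, x^+2 + x + 1 != 0 by move=> x; apply/eqP; nra.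
by rewrite (negbTE (pos d)).
Qed.

Lemma det_cube (A : 'M[R]_3) : A *m (A *m A) = 1%:M -> \det A = 1.
Proof. by move=> h; apply: cube1; rewrite -!det_mulmx h det1. Qed.

Lemma Cm3 : Cm *m (Cm *m Cm) = 1%:M.
Proof. by apply: mx3P; rewrite !mul3E !mxE /=; ring. Qed.
Lemma Dm3 : Dm *m (Dm *m Dm) = 1%:M.
Proof. by apply: mx3P; rewrite !mul3E !mxE /=; ring. Qed.
Lemma CDm : Cm *m Dm <> Dm *m Cm.
Proof.
move=> /matrixP /(_ i0 i1); rewrite !mul3E !mxE /= => h.
lra.
Qed.

Lemma Oh_Cm : Oh_group Cm.
Proof.
split; last by apply: mx3P; rewrite !mul3E !mxE /=; ring.
apply: ord3P; apply: ord3P; rewrite mxE /=; by [left | right; left | right; right].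
Qed.
Lemma Oh_Dm : Oh_group Dm.
Proof.
split; last by apply: mx3P; rewrite !mul3E !mxE /=; ring.
apply: ord3P; apply: ord3P; rewrite mxE /=; by [left | right; left | right; right].
Qed.
Lemma O_Cm : O_group Cm.
Proof. by split; [exact: Oh_Cm | apply: det_cube; exact: Cm3]. Qed.
Lemma O_Dm : O_group Dm.
Proof. by split; [exact: Oh_Dm | apply: det_cube; exact: Dm3]. Qed.
Lemma Td_Cm : Td_group Cm.
Proof.
split; first exact: Oh_Cm.
by rewrite !big_ord_recl !big_ord0 !mxE /=; ring.
Qed.
Lemma Td_Dm : Td_group Dm.
Proof.
split; first exact: Oh_Dm.
by rewrite !big_ord_recl !big_ord0 !mxE /=; ring.
Qed.


Lemma core (G : aff R -> Prop) (q q0 : 'cV[R]_3) (c : aff R) (P : 'M[R]_3 -> Prop) :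
  isom_group G -> (forall g, site G q0 g -> site G q g) -> site G q c -> ~ site G q0 c ->
  (forall g, site G q g -> site G q0 g \/ site G q0 (Defs.comp (aff_inv c) g)) ->
  (forall M, P M -> orthogonal_mx M) -> P Cm -> P Dm -> isomorphic (site G q) P -> False.
Proof.
move=> [Horth Hid Hcomp Hinv] HKH Hc HnK Hidx HPo HC HD [f [fP finj fsurj fhom]].
set v := q0 - q.
have fixq : forall g, site G q g -> g.2 = q - g.1 *m q.
  by move=> g [_ h]; rewrite -{1}h /act addrC addKr.
have Hcl : forall g h, site G q g -> site G q h -> site G q (Defs.comp g h).
  move=> g h Hg Hh; split; first by apply: Hcomp; [case: Hg | case: Hh].
  case: Hg => _; rewrite /act => hg; case: Hh => _; rewrite /act => hh.
  by rewrite /act /Defs.comp /= -mulmxA addrA -mulmxDr hh.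
have K_iff : forall g, site G q g -> (site G q0 g <-> g.1 *m v = v).
  move=> g Hg; have e : act g q0 - q0 = g.1 *m v - v.
    rewrite /act (fixq g Hg) /v mulmxBr.
    by apply/matrixP => i j; rewrite !mxE; ring.
  split.
  - by case=> _ h; apply/eqP; rewrite -subr_eq0 -e h subrr.
  - move=> h; split; first by case: Hg.
    by apply/eqP; rewrite -subr_eq0 e h subrr.
have Hw : forall g, site G q g -> g.1 *m v = v \/ g.1 *m v = c.1 *m v.
  move=> g Hg; case: (Hidx g Hg) => [Kg | Kcg].
  - by left; apply/(K_iff g Hg).
  - right; have Hh := HKH _ Kcg.
    have := (K_iff _ Hh).1 Kcg; rewrite /Defs.comp /aff_inv /= => e.
    have oc := Horth c (proj1 Hc).
    by rewrite -[in RHS]e !mulmxA oc mul1mx.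
have Hcv : c.1 *m v != v.
  by apply/eqP => e; apply: HnK; apply/(K_iff c Hc).
have Hinj : forall g, site G q g -> forall x y : 'cV[R]_3, g.1 *m x = g.1 *m y -> x = y.
  move=> g Hg x y e.
  have o : g.1^T *m g.1 = 1%:M by apply: mulmx1C; apply: Horth; case: Hg.
  by rewrite -(mul1mx x) -(mul1mx y) -o -!mulmxA e.
have fix3 : forall g, site G q g -> g.1 *m (g.1 *m g.1) = 1%:M -> g.1 *m v = v.
  move=> g Hg h3.
  have Hg2 := Hcl g g Hg Hg.
  case: (Hw g Hg) => // e1; exfalso.
  case: (Hw _ Hg2) => /= e2.
  - have e3 : g.1 *m (c.1 *m v) = v by rewrite -e1 mulmxA.
    move/eqP: Hcv; apply.
    have : g.1 *m (g.1 *m g.1) *m v = v by rewrite h3 mul1mx.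
    by rewrite -!mulmxA e1 e3 e1 => ->.
  - move/eqP: Hcv; apply.
    apply: (Hinj g Hg).
    by rewrite -e1 mulmxA e2 e1.
have Hid' : site G q (aff_id R).
  by split; [exact: Hid | rewrite /act /aff_id /= mul1mx addr0].
have fid : f (aff_id R) = 1%:M.
  have e : Defs.comp (aff_id R) (aff_id R) = aff_id R.
    by rewrite /Defs.comp /aff_id /= mul1mx mulmx0 addr0.
  have := fhom _ _ Hid' Hid'; rewrite e => h.
  have o := HPo _ (fP _ Hid').
  move: h o; set M := f (aff_id R) => h o.
  by rewrite -{1}(mulmx1 M) -o mulmxA -h.
have cube : forall g, site G q g -> f g *m (f g *m f g) = 1%:M ->
    g.1 *m (g.1 *m g.1) = 1%:M.
  move=> g Hg h.
  have H3 := Hcl _ _ Hg (Hcl _ _ Hg Hg).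
  have : Defs.comp g (Defs.comp g g) = aff_id R.
    apply: finj; [exact: H3 | exact: Hid' | ].
    by rewrite (fhom _ _ Hg (Hcl _ _ Hg Hg)) (fhom _ _ Hg Hg) fid h.
  by move=> /(congr1 fst).
have [a Ha fa] := fsurj _ HC.
have [b Hb fb] := fsurj _ HD.
have a3 := cube a Ha ltac:(by rewrite fa Cm3).
have b3 := cube b Hb ltac:(by rewrite fb Dm3).
have av := fix3 a Ha a3.
have bv := fix3 b Hb b3.
have v0 : v != 0.
  by apply/eqP => e; move/eqP: Hcv; apply; rewrite e mulmx0.
have hab : a.1 *m b.1 = b.1 *m a.1.
  apply: (comm_J v0).
  - by rewrite (rot_comm_J _ a3 av v0) //; apply: Horth; case: Ha.
  - by rewrite (rot_comm_J _ b3 bv v0) //; apply: Horth; case: Hb.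
have H1 := Hcl _ _ Ha Hb.
have H2 := Hcl _ _ Hb Ha.
have e : Defs.comp a b = Defs.comp b a.
  rewrite [Defs.comp a b]surjective_pairing [Defs.comp b a]surjective_pairing.
  by rewrite (fixq _ H1) (fixq _ H2) /= hab.
apply: CDm.
by rewrite -fa -fb -fhom // e fhom.
Qed.

End LinAlg.

Unset Implicit Arguments.
Theorem mainTheorem6 (R : realType) (G : aff R -> Prop) (q : 'cV[R]_3) :
  space_group G ->
  maximal_site G q ->
  (isomorphic (site G q) (@O_group R) \/
   isomorphic (site G q) (@Td_group R) \/
   isomorphic (site G q) (@Oh_group R)) ->
  ~ exists q0 : 'cV[R]_3, index_two_subgroup (site G q0) (site G q).
Proof.
move=> [HG _] _ Hiso [q0 [HKH [c [Hc HnK Hidx]]]].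
case: Hiso => [|[|]] Hiso.
- apply: (core HG HKH Hc HnK Hidx _ (O_Cm R) (O_Dm R) Hiso).
  by move=> M [[_ ?] _].
- apply: (core HG HKH Hc HnK Hidx _ (Td_Cm R) (Td_Dm R) Hiso).
  by move=> M [[_ ?] _].
- apply: (core HG HKH Hc HnK Hidx _ (Oh_Cm R) (Oh_Dm R) Hiso).
  by move=> M [_ ?].
Qed.
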